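(* For every real $x\notin\mathbb Z$, $$\csc^2(\pi x)+|\cot(\pi x)\csc(\pi x)|\leqslant \tfrac14\|x\|^{-2}$$ and $$|\cot(\pi x)\csc(\pi x)|\leqslant \pi^{-2}\|x\|^{-2}.$$
   Context: For real $\theta$, $\|\theta\|=\min_{n\in\mathbb Z}|\theta-n|$ denotes the distance from $\theta$ to the nearest integer. *)

(* Defs.v *)
From Stdlib Require Import Reals.
Open Scope R_scope.

(* ||x|| = min_{n in Z} |x - n|, the distance from x to the nearest integer.
   Here up x is the least integer strictly greater than x, so up x - 1 = floor x;
   the nearest integer is either floor x or floor x + 1. *)
Definition dist_Z (x : R) : R :=
  Rmin (x - IZR (up x - 1)) (IZR (up x) - x).

Definition csc (x : R) : R := / sin x.
Definition cot (x : R) : R := cos x / sin x.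

(* Main.v *)
Require Import Defs.
From Stdlib Require Import Reals Lra Lia Psatz ZArith.
Open Scope R_scope.

Lemma fact_R n : INR (fact n) = IZR (Z.of_nat (fact n)).
Proof. apply INR_IZR_INZ. Qed.
Lemma cos_ub_eq a : cos_ub a = 1 - a^2/2 + a^4/24 - a^6/720 + a^8/40320.
Proof. unfold cos_ub, cos_approx, cos_term. cbv [sum_f_R0]. rewrite !fact_R.
  replace (Z.of_nat (fact (2*0))) with 1%Z by (vm_compute; reflexivity).
  replace (Z.of_nat (fact (2*1))) with 2%Z by (vm_compute; reflexivity).
  replace (Z.of_nat (fact (2*2))) with 24%Z by (vm_compute; reflexivity).
  replace (Z.of_nat (fact (2*3))) with 720%Z by (vm_compute; reflexivity).
  replace (Z.of_nat (fact (2*4))) with 40320%Z by (vm_compute; reflexivity).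
  change (2*0)%nat with 0%nat. change (2*1)%nat with 2%nat. change (2*2)%nat with 4%nat.
  change (2*3)%nat with 6%nat. change (2*4)%nat with 8%nat.
  field. Qed.
Lemma sin_lb_eq a : sin_lb a = a - a^3/6 + a^5/120 - a^7/5040.
Proof. unfold sin_lb, sin_approx, sin_term. cbv [sum_f_R0]. rewrite !fact_R.
  replace (Z.of_nat (fact (2*0+1))) with 1%Z by (vm_compute; reflexivity).
  replace (Z.of_nat (fact (2*1+1))) with 6%Z by (vm_compute; reflexivity).
  replace (Z.of_nat (fact (2*2+1))) with 120%Z by (vm_compute; reflexivity).
  replace (Z.of_nat (fact (2*3+1))) with 5040%Z by (vm_compute; reflexivity).
  change (2*0+1)%nat with 1%nat. change (2*1+1)%nat with 3%nat. change (2*2+1)%nat with 5%nat.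
  change (2*3+1)%nat with 7%nat.
  field. Qed.

Lemma PI_le_32 : PI <= 3.2.
Proof.
  destruct (Rle_lt_dec PI 3.2) as [h|h]; [exact h|exfalso].
  assert (H1 : 0 < cos 1.6) by (apply cos_gt_0; lra).
  assert (H2 := COS 1.6 ltac:(lra) ltac:(lra)).
  rewrite cos_ub_eq in H2. lra.
Qed.

Lemma cos_ub4 a : 0 <= a -> a <= PI/2 -> cos a <= 1 - a^2/2 + a^4/24.
Proof.
  intros h0 h1. pose proof PI_le_32.
  assert (H2 := COS a ltac:(lra) h1).
  rewrite cos_ub_eq in H2.
  assert (a*a <= 4) by nra.
  assert (0 <= a^6) by (apply pow_le; lra).
  assert (a^8 = a^6 * (a*a)) by ring.
  nra.
Qed.

Lemma sin_lb3 a : 0 <= a -> a <= PI/2 -> a - a^3/6 <= sin a.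
Proof.
  intros h0 h1. pose proof PI_le_32.
  assert (H2 := SIN a h0 ltac:(lra)).
  rewrite sin_lb_eq in H2.
  assert (a*a <= 4) by nra.
  assert (0 <= a^5) by (apply pow_le; lra).
  assert (a^7 = a^5 * (a*a)) by ring.
  nra.
Qed.

Lemma lemB u : 0 < u -> u <= PI/2 -> u^2 * cos u <= sin u ^ 2.
Proof.
  intros h0 h1. pose proof PI_le_32.
  assert (Hc := cos_ub4 u ltac:(lra) h1).
  assert (Hs := sin_lb3 u ltac:(lra) h1).
  assert (u*u <= 4) by nra.
  assert (0 <= u - u^3/6) by nra.
  assert (u^2 * cos u <= u^2 * (1 - u^2/2 + u^4/24)) by (apply Rmult_le_compat_l; nra).
  assert ((u - u^3/6)^2 <= sin u ^2) by (apply pow_incr; lra).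
  assert (u^2 * (1 - u^2/2 + u^4/24) <= (u - u^3/6)^2) by nra.
  lra.
Qed.

Lemma lemA t : 0 < t -> t <= 1/2 -> 4 * t^2 <= 1 - cos (PI * t).
Proof.
  intros h0 h1. pose proof PI_le_32. pose proof PI2_3_2.
  destruct (Rle_lt_dec t 0.3) as [h|h].
  - assert (Hc := cos_ub4 (PI*t) ltac:(nra) ltac:(nra)).
    assert (PI^4 <= 3.2^4) by (apply pow_incr; lra).
    assert (9 <= PI^2) by nra.
    assert (PI^4 * t^2 <= 3.2^4 * 0.09) by
      (apply Rmult_le_compat; try nra; apply pow_le; lra).
    assert ((PI*t)^2/2 - (PI*t)^4/24 - 4*t^2 = t^2 * (PI^2/2 - PI^4 * t^2/24 - 4)) by field.
    assert (0 <= t^2 * (PI^2/2 - PI^4 * t^2/24 - 4)) by (apply Rmult_le_pos; nra).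
    lra.
  - set (y := 1/2 - t).
    assert (Ht : PI * t = PI/2 - PI*y) by (unfold y; field).
    rewrite Ht, cos_shift.
    destruct (Req_dec y 0) as [e|e].
    + rewrite e, Rmult_0_r, sin_0. unfold y in e. nra.
    + assert (sin (PI*y) < PI*y) by (apply sin_lt_x; unfold y in *; nra).
      assert (Hty : t = 1/2 - y) by (unfold y; ring).
      rewrite Hty. assert (0 < y) by (unfold y in *; lra). nra.
Qed.

Lemma cos_periodZ w n : cos (w + 2 * IZR n * PI) = cos w.
Proof.
  destruct (Z.le_ge_cases 0 n) as [h|h].
  - rewrite <- (Z2Nat.id n h), <- INR_IZR_INZ. apply cos_period.
  - assert (e : n = (- Z.of_nat (Z.to_nat (- n)))%Z) by lia.
    rewrite e, opp_IZR, <- INR_IZR_INZ.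
    rewrite <- (cos_period (w + 2 * - INR (Z.to_nat (- n)) * PI) (Z.to_nat (-n))).
    f_equal. ring.
Qed.

Lemma reduce x : (forall n : Z, x <> IZR n) ->
  0 < dist_Z x <= 1/2 /\ cos (2 * (PI * x)) = cos (2 * (PI * dist_Z x)).
Proof.
  intros hx. destruct (archimed x) as [a1 a2].
  set (n := (up x - 1)%Z).
  assert (En : IZR n = IZR (up x) - 1) by (unfold n; rewrite minus_IZR; ring).
  assert (Hn : IZR n <> x) by (intro e; apply (hx n); auto).
  set (f := x - IZR n).
  assert (Hd : dist_Z x = Rmin f (1 - f)) by (unfold dist_Z; replace (IZR (up x) - x) with (1 - f) by (unfold f; lra); reflexivity).
  assert (Hc : cos (2 * (PI * x)) = cos (2 * (PI * f))).
  { replace (2 * (PI * x)) with (2 * (PI * f) + 2 * IZR n * PI) by (unfold f; ring).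
    apply cos_periodZ. }
  assert (Hf : 0 < f < 1).
  { unfold f; split; [|lra]. destruct (Rle_lt_or_eq_dec 0 (x - IZR n)) as [h|h]; [lra|exact h|].
    exfalso; apply Hn; lra. }
  rewrite Hd, Hc. unfold Rmin. destruct (Rle_dec f (1 - f)).
  - split; [split; lra | reflexivity].
  - split; [split; lra |].
    replace (2 * (PI * f)) with (- (2 * (PI * (1 - f))) + 2 * INR 1 * PI) by (simpl; ring).
    rewrite cos_period, cos_neg. reflexivity.
Qed.

Lemma div_le_inv a b z : 0 < a -> 0 < b -> z * b <= a -> z / a <= / b.
Proof.
  intros ha hb h. unfold Rdiv.
  apply Rmult_le_reg_r with (a * b); [nra|].
  replace (z * / a * (a * b)) with (z * b) by (field; lra).
  replace (/ b * (a * b)) with a by (field; lra). exact h.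
Qed.

Theorem lemma1 : forall x : R, (forall n : Z, x <> IZR n) ->
  (csc (PI * x))^2 + Rabs (cot (PI * x) * csc (PI * x)) <= / 4 * / (dist_Z x)^2 /\
  Rabs (cot (PI * x) * csc (PI * x)) <= / (PI^2) * / (dist_Z x)^2.
Proof.
  intros x hx.
  destruct (reduce x hx) as [[ht0 ht1] Hc2].
  set (t := dist_Z x) in *.
  pose proof PI_le_32. pose proof PI2_3_2.
  assert (HA := lemA t ht0 ht1).
  assert (HB := lemB (PI * t) ltac:(nra) ltac:(nra)).
  assert (Hs : 0 < sin (PI * t)) by (apply sin_gt_0; nra).
  assert (Hc : 0 <= cos (PI * t)) by (apply cos_ge_0; nra).
  assert (Hsc := sin2_cos2 (PI * t)). unfold Rsqr in Hsc.
  assert (ES : sin (PI * x) * sin (PI * x) = sin (PI * t) * sin (PI * t)).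
  { rewrite cos_2a_sin, cos_2a_sin in Hc2. lra. }
  assert (EC : cos (PI * x) * cos (PI * x) = cos (PI * t) * cos (PI * t)).
  { rewrite cos_2a_cos, cos_2a_cos in Hc2. lra. }
  assert (EA : Rabs (cos (PI * x)) = cos (PI * t)).
  { assert (h := Rsqr_abs (cos (PI * x))). unfold Rsqr in h.
    assert (0 <= Rabs (cos (PI * x))) by apply Rabs_pos. nra. }
  assert (Hss : 0 < sin (PI * t) * sin (PI * t)) by nra.
  assert (HS : sin (PI * x) <> 0) by (intro e; rewrite e in ES; nra).
  assert (E1 : csc (PI * x) ^ 2 = / (sin (PI * t) * sin (PI * t))).
  { unfold csc. rewrite <- ES. field. exact HS. }
  assert (E2 : Rabs (cot (PI * x) * csc (PI * x)) = cos (PI * t) / (sin (PI * t) * sin (PI * t))).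
  { unfold cot, csc.
    replace (cos (PI * x) / sin (PI * x) * / sin (PI * x))
      with (cos (PI * x) * / (sin (PI * t) * sin (PI * t))) by (rewrite <- ES; field; exact HS).
    rewrite Rabs_mult, EA, (Rabs_pos_eq (/ _)); [reflexivity|].
    left; apply Rinv_0_lt_compat; exact Hss. }
  rewrite E1, E2. split.
  - replace (/ (sin (PI * t) * sin (PI * t)) + cos (PI * t) / (sin (PI * t) * sin (PI * t)))
      with ((1 + cos (PI * t)) / (sin (PI * t) * sin (PI * t))) by (field; lra).
    rewrite <- Rinv_mult.
    apply div_le_inv; [exact Hss | apply Rmult_lt_0_compat; (lra || (apply pow_lt; lra)) |].
    assert (0 <= 1 + cos (PI * t)) by lra. nra.
  - rewrite <- Rinv_mult.
    apply div_le_inv; [exact Hss | apply Rmult_lt_0_compat; (lra || (apply pow_lt; lra)) |].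
    replace (cos (PI * t) * (PI ^ 2 * t ^ 2)) with ((PI * t)^2 * cos (PI * t)) by ring.
    simpl in HB |- *. nra.
Qed.
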